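(* Let $G_1$ and $G_2$ be two vertex-disjoint simple connected graphs with $|V(G_1)|=n_1$, $|V(G_2)|=n_2$, $|E(G_1)|=m_1$, $|E(G_2)|=m_2$. Then the vertex T-join $G_1\dot{\vee}_T G_2$ satisfies \[ F(G_1\dot{\vee}_T G_2)=8F(G_1)+F(G_2)+12n_2M_1(G_1)+3n_1M_1(G_2)+M_4(G_1)+3\,ReZM(G_1)+12m_1n_2^{2}+6m_2n_1^{2}+n_1n_2(n_1^2+n_2^2). \]
   Context: For a simple graph $G$ and $v\in V(G)$, $d_G(v)$ is the degree of $v$. Define $M_1(G)=\sum_{v\in V(G)}d_G(v)^2$, $F(G)=\sum_{v\in V(G)}d_G(v)^3$, $M_4(G)=\sum_{v\in V(G)}d_G(v)^4$, and $ReZM(G)=\sum_{uv\in E(G)}d_G(u)d_G(v)\,[d_G(u)+d_G(v)]$. The total graph $T(G)$ is obtained from $G$ (keeping all edges of $G$) by inserting a new vertex for each edge of $G$, joining each new vertex to the two end vertices of its edge, and joining by an edge each pair of new vertices corresponding to adjacent edges of $G$ (edges sharing an end vertex); let $I(G)$ denote the set of these new vertices, so $V(T(G))=V(G)\cup I(G)$. The vertex T-join $G_1\dot{\vee}_T G_2$ is the graph obtained from $T(G_1)$ and $G_2$ (taken vertex-disjoint) by joining each vertex of $V(G_1)$ to every vertex of $G_2$ by an edge. *)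

(* Defs.v *)
From mathcomp Require Import all_boot.
Set Implicit Arguments. Unset Strict Implicit. Unset Printing Implicit Defensive.

Section Graphs.
Variable V : finType.
Implicit Types (r : rel V).

Definition simple_graph r := symmetric r /\ irreflexive r.

Definition connected_graph r := 0 < #|V| /\ forall x y : V, connect r x y.

Definition deg r (v : V) : nat := #|[set u | r v u]|.

Definition edges r : {set {set V}} :=
  [set E : {set V} | [exists u, exists v, r u v && (E == [set u; v])]].

Definition M1 r := \sum_(v : V) deg r v ^ 2.
Definition Fidx r := \sum_(v : V) deg r v ^ 3.
Definition M4 r := \sum_(v : V) deg r v ^ 4.
Definition ReZM r :=
  \sum_(E in edges r) ((\prod_(x in E) deg r x) * (\sum_(x in E) deg r x)).
End Graphs.

(* the type of edges of G, i.e. of new vertices I(G) in the total graph *)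
Definition edge_type (V : finType) (r : rel V) := {E : {set V} | E \in edges r}.

Definition total_rel (V : finType) (r : rel V) : rel (V + edge_type r) :=
  fun a b =>
    match a, b with
    | inl u, inl v => r u v
    | inl u, inr E => u \in val E
    | inr E, inl u => u \in val E
    | inr E, inr F => (E != F) && (val E :&: val F != set0)
    end.

Definition vertex_T_join (V1 V2 : finType) (r1 : rel V1) (r2 : rel V2)
  : rel ((V1 + edge_type r1) + V2) :=
  fun a b =>
    match a, b with
    | inl x, inl y => @total_rel _ r1 x y
    | inl (inl _), inr _ => true
    | inr _, inl (inl _) => true
    | inr u, inr v => r2 u v
    | _, _ => false
    end.

Arguments total_rel {V} r.
Arguments vertex_T_join {V1 V2} r1 r2.
Arguments edge_type {V} r.

(* Main.v *)
Require Import Defs.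
From mathcomp Require Import all_boot ring.
Set Implicit Arguments. Unset Strict Implicit. Unset Printing Implicit Defensive.

Lemma deg_sum (T : finType) (r : rel T) v : deg r v = \sum_u (r v u : nat).
Proof.
rewrite /deg -sum1_card big_mkcond /=; apply: eq_bigr => u _.
by rewrite inE; case: (r v u).
Qed.

Lemma sum_card (T : finType) (A : {set T}) (P : pred T) :
  \sum_(x in A) (P x : nat) = #|[set x in A | P x]|.
Proof.
rewrite -sum1_card [RHS]big_mkcond [LHS]big_mkcond /=; apply: eq_bigr => x _.
by rewrite inE; case: (x \in A); case: (P x).
Qed.

Lemma sum_edge_type (T : finType) (r : rel T) (f : {set T} -> nat) :
  \sum_(E : edge_type r) f (val E) = \sum_(F in edges r) f F.
Proof.
have e : [set val E | E : edge_type r] = edges r.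
  apply/setP => F; apply/imsetP/idP => [[E _ ->]|HF].
    exact: valP.
  by exists (Sub F HF).

transitivity (\sum_(F in [set val E | E : edge_type r]) f F); last first.
  by apply: eq_bigl => F; rewrite e.
rewrite big_imset //; by move=> x y _ _; apply: val_inj.
Qed.

Lemma edgeP (T : finType) (r : rel T) E :
  simple_graph r -> E \in edges r -> exists u v, [/\ r u v, u != v & E = [set u; v]].
Proof.
move=> [sym irr]; rewrite inE => /existsP [u /existsP [v /andP [ruv /eqP ->]]].
exists u, v; split => //; apply/eqP => euv; by rewrite euv irr in ruv.
Qed.

Lemma count_edges (T : finType) (r : rel T) x :
  simple_graph r -> #|[set E in edges r | x \in E]| = deg r x.
Proof.
move=> [sym irr].
have -> : [set E in edges r | x \in E] = [set [set x; u] | u in [set u | r x u]].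
  apply/setP => E; rewrite inE; apply/andP/imsetP.
    move=> [/(@edgeP _ _ _ (conj sym irr)) [u [v [ruv nuv ->]]] xin].
    move: xin; rewrite !inE => /orP [/eqP ->|/eqP ->].
      by exists v; rewrite ?inE.
    by exists u; rewrite ?inE 1?sym // setUC.
  move=> [u]; rewrite inE => rxu ->; split; last by rewrite !inE eqxx.
  by rewrite inE; apply/existsP; exists x; apply/existsP; exists u; rewrite rxu eqxx.
rewrite card_in_imset // => u w; rewrite !inE => rxu rxw e.
have : w \in [set x; u] by rewrite e !inE eqxx orbT.
rewrite !inE => /orP [/eqP wx|/eqP //].
by rewrite wx irr in rxw.
Qed.

Lemma exch_edges (T : finType) (r : rel T) (f : T -> nat) :
  simple_graph r ->
  \sum_(E in edges r) \sum_(x in E) f x = \sum_x f x * deg r x.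
Proof.
move=> sg.
transitivity (\sum_(E in edges r) \sum_x (x \in E) * f x).
  apply: eq_bigr => E _; rewrite big_mkcond /=; apply: eq_bigr => x _.
  by case: (x \in E); rewrite ?mul1n.
rewrite exchange_big /=; apply: eq_bigr => x _.
rewrite -(count_edges x sg) -sum_card big_distrr /=; apply: eq_bigr => E _.
by rewrite mulnC.
Qed.

Lemma card_edge (T : finType) (r : rel T) E : simple_graph r -> E \in edges r -> #|E| = 2.
Proof. by move=> sg /(edgeP sg) [u [v [_ nuv ->]]]; rewrite cards2 nuv. Qed.

Lemma handshake (T : finType) (r : rel T) : simple_graph r -> \sum_x deg r x = 2 * #|edges r|.
Proof.
move=> sg.
transitivity (\sum_x 1 * deg r x); first by apply: eq_bigr => x _; rewrite mul1n.
rewrite -(@exch_edges _ r (fun _ => 1)) // mulnC -sum_nat_const; apply: eq_bigr => E HE.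
by rewrite sum1_card (card_edge sg HE).
Qed.

Lemma sum_in_card (T : finType) (A : {set T}) : \sum_x (x \in A : nat) = #|A|.
Proof.
rewrite -sum1_card [RHS]big_mkcond /=; apply: eq_bigr => x _; by case: (x \in A).
Qed.

Lemma inter2 (T : finType) (a b : T) (F : {set T}) :
  ([set a; b] :&: F != set0) = (a \in F) || (b \in F).
Proof.
apply/set0Pn/orP => [[x]|[H|H]].
  by rewrite !inE => /andP [/orP [/eqP ->|/eqP ->] H]; [left|right].
  by exists a; rewrite !inE eqxx H.
by exists b; rewrite !inE eqxx H orbT.
Qed.

Lemma nbr_count (T : finType) (r : rel T) E0 : simple_graph r -> E0 \in edges r ->
  #|[set F in edges r | (E0 != F) && (E0 :&: F != set0)]| + 2 = \sum_(x in E0) deg r x.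
Proof.
move=> sg HE; have [a [b [rab nab eE]]] := edgeP sg HE.
rewrite [in RHS]eE big_setU1 /=; last by rewrite inE.
rewrite big_set1 -!(count_edges _ sg).
set S := [set F in edges r | (E0 != F) && _].
set A := [set F in edges r | a \in F]; set B := [set F in edges r | b \in F].
have memA F : (F \in A) = (F \in edges r) && (a \in F) by rewrite /A !inE.
have memB F : (F \in B) = (F \in edges r) && (b \in F) by rewrite /B !inE.
have memS F : (F \in S) = (F \in edges r) && ((E0 != F) && (E0 :&: F != set0)) by rewrite /S !inE.
have hU : A :|: B = E0 |: S.
  apply/setP => F; rewrite in_setU in_setU1 memA memB memS eE inter2.
  case: (eqVneq F [set a; b]) => [->|nF] /=.
    by rewrite -eE HE eE !inE eqxx.
  by rewrite andb_orr.
have hI : A :&: B = [set E0].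
  apply/setP => F; rewrite in_setI in_set1 memA memB; apply/idP/eqP => [/andP [/andP [HF aF] /andP [_ bF]]|->].
    apply/esym/eqP; rewrite eqEcard (card_edge sg HF) eE cards2 nab andbT.
    by apply/subsetP => x; rewrite !inE => /orP [/eqP ->|/eqP ->].
  by rewrite HE eE !inE !eqxx orbT.
rewrite -cardsUI hU hI cards1 cardsU1.
have -> : E0 \notin S by rewrite memS eqxx andbF.
by rewrite add1n addn1 addn2.
Qed.

Section J.
Variables (V1 V2 : finType) (r1 : rel V1) (r2 : rel V2).
Hypothesis sg1 : simple_graph r1.
Hypothesis sg2 : simple_graph r2.

Lemma degA v : deg (vertex_T_join r1 r2) (inl (inl v)) = 2 * deg r1 v + #|V2|.
Proof.
rewrite deg_sum !big_sumType /=.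
rewrite (@sum_edge_type _ r1 (fun F : {set V1} => (v \in F) : nat)) sum_card count_edges //.
rewrite -deg_sum sum_nat_const muln1; ring.
Qed.

Lemma degB E : deg (vertex_T_join r1 r2) (inl (inr E)) = \sum_(x in val E) deg r1 x.
Proof.
rewrite deg_sum !big_sumType /= sum_in_card.
rewrite big1_eq addn0 (card_edge sg1 (valP E)) -(nbr_count sg1 (valP E)) -sum_card.
rewrite -(@sum_edge_type _ r1 (fun F : {set V1} => (val E != F) && (val E :&: F != set0) : nat)).
rewrite addnC; congr (_ + _); apply: eq_bigr => F _.
Qed.

Lemma degC w : deg (vertex_T_join r1 r2) (inr w) = deg r2 w + #|V1|.
Proof.
rewrite deg_sum !big_sumType /= big1_eq addn0 sum_nat_const muln1 -deg_sum addnC //.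
Qed.
End J.

Lemma cube_edge (T : finType) (r : rel T) (d : T -> nat) E : simple_graph r -> E \in edges r ->
  (\sum_(x in E) d x) ^ 3 = \sum_(x in E) d x ^ 3 + 3 * ((\prod_(x in E) d x) * \sum_(x in E) d x).
Proof.
move=> sg /(edgeP sg) [a [b [_ nab ->]]].
rewrite !big_setU1 /= ?inE // !big_set1; ring.
Qed.

Theorem theorem7 (V1 V2 : finType) (r1 : rel V1) (r2 : rel V2) :
  simple_graph r1 -> simple_graph r2 ->
  connected_graph r1 -> connected_graph r2 ->
  let n1 := #|V1| in let n2 := #|V2| in
  let m1 := #|edges r1| in let m2 := #|edges r2| in
  Fidx (vertex_T_join r1 r2) =
    8 * Fidx r1 + Fidx r2 + 12 * n2 * M1 r1 + 3 * n1 * M1 r2 + M4 r1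
    + 3 * ReZM r1 + 12 * m1 * n2 ^ 2 + 6 * m2 * n1 ^ 2
    + n1 * n2 * (n1 ^ 2 + n2 ^ 2).
Proof.
move=> sg1 sg2 _ _ n1 n2 m1 m2.
have p1 : \sum_v deg (vertex_T_join r1 r2) (inl (inl v)) ^ 3 =
   8 * Fidx r1 + 12 * n2 * M1 r1 + 6 * n2 ^ 2 * (2 * m1) + n1 * n2 ^ 3.
  rewrite -(handshake sg1) /Fidx /M1 !big_distrr /= -sum_nat_const -!big_split /=.
  by apply: eq_bigr => v _; rewrite (degA r2 sg1); ring.
have p3 : \sum_w deg (vertex_T_join r1 r2) (inr w) ^ 3 =
   Fidx r2 + 3 * n1 * M1 r2 + 3 * n1 ^ 2 * (2 * m2) + n2 * n1 ^ 3.
  rewrite -(handshake sg2) /Fidx /M1 !big_distrr /= -sum_nat_const -!big_split /=.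
  by apply: eq_bigr => v _; rewrite (degC r1 r2); ring.
have p2 : \sum_(E : edge_type r1) deg (vertex_T_join r1 r2) (inl (inr E)) ^ 3 =
   M4 r1 + 3 * ReZM r1.
  transitivity (\sum_(E : edge_type r1) (fun F : {set V1} => (\sum_(x in F) deg r1 x) ^ 3) (val E)).
    by apply: eq_bigr => E _; rewrite (degB r2 sg1).
  etransitivity; first exact: (@sum_edge_type _ r1 (fun F : {set V1} => (\sum_(x in F) deg r1 x) ^ 3)).
  under eq_bigr => F HF do rewrite (cube_edge _ sg1 HF).
  rewrite big_split /= -big_distrr /= exch_edges // /M4 /ReZM; congr (_ + _).
  by apply: eq_bigr => v _; rewrite -expnSr.
rewrite {1}/Fidx !big_sumType /= p1 p2 p3.
ring.
Qed.
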